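(* Let $P$ be a Poisson tensor on $\mathbb{R}^3$, let $H\in C^\infty(\mathbb{R}^3)$, let $S\in C^\infty(\mathbb{R}^3)$ satisfy $PdS=0$, and let $g$ be the symmetric tensor with components $g^{ij}=H^iH^j-\delta^{ij}\sum_k H^kH^k$. Let $\xi=PdH+gdS$ and $\xi_P=PdH$. Then for $x\in\mathbb{R}^3$, $\xi(x)=\xi_P(x)$ if and only if either $d_xH=0$, or $x$ is a critical point of the restriction of $S$ to the level surface $\{H=H(x)\}$.
   Context: $\mathbb{R}^3$ carries the standard Euclidean metric, used to identify tangent and cotangent spaces with $\mathbb{R}^3$; $H^i=H_i=\partial H/\partial x^i$. A Poisson tensor is a skew-symmetric bivector field satisfying the Jacobi identity. *)

(* Defs.v *)
From HB Require Import structures.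
From mathcomp Require Import all_boot all_order all_algebra.
From mathcomp Require Import all_classical all_reals all_analysis.
Set Implicit Arguments. Unset Strict Implicit. Unset Printing Implicit Defensive.
Import Order.TTheory GRing.Theory Num.Theory.
Import numFieldNormedType.Exports.
Local Open Scope ring_scope.

Section Defs.
Variable R : realType.
Notation V := 'rV[R]_3.

Definition ebase (i : 'I_3) : V := delta_mx 0 i.

Definition partial (i : 'I_3) (f : V -> R) : V -> R :=
  fun x => 'D_(ebase i) f x.

Fixpoint Ck (k : nat) (f : V -> R) : Prop :=
  match k with
  | 0 => continuous f
  | k'.+1 => continuous f /\
      (forall x i, derivable f x (ebase i)) /\
      (forall i, Ck k' (partial i f))
  end.

Definition smooth (f : V -> R) : Prop := forall k, Ck k f.

Definition poisson_tensor (P : V -> 'M[R]_3) : Prop :=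
  (forall i j, smooth (fun x => P x i j)) /\
  (forall x i j, P x i j = - P x j i) /\
  (forall x i j k,
     \sum_(l < 3) (P x i l * partial l (fun y => P y j k) x
                 + P x j l * partial l (fun y => P y k i) x
                 + P x k l * partial l (fun y => P y i j) x) = 0).

Definition Pd (P : V -> 'M[R]_3) (F : V -> R) (x : V) : V :=
  \row_i \sum_(j < 3) P x i j * partial j F x.

Definition gmetric (H : V -> R) (x : V) : 'M[R]_3 :=
  \matrix_(i, j) (partial i H x * partial j H x
     - (i == j)%:R * \sum_(k < 3) partial k H x * partial k H x).

Definition gd (H F : V -> R) (x : V) : V :=
  \row_i \sum_(j < 3) gmetric H x i j * partial j F x.

Definition xi (P : V -> 'M[R]_3) (H S : V -> R) (x : V) : V := Pd P H x + gd H S x.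
Definition xiP (P : V -> 'M[R]_3) (H : V -> R) (x : V) : V := Pd P H x.

(* x is a critical point of the restriction of S to the level surface
   {y | H y = H x}: the differential d_xS vanishes on the tangent space
   T_x{H = H x} = ker d_xH (this is the meaning when d_xH <> 0, the only
   case in which the notion is used non-vacuously in the theorem). *)
Definition crit_on_level (S H : V -> R) (x : V) : Prop :=
  forall v : V, 'd H x v = 0 -> 'd S x v = 0.

End Defs.

(* Main.v *)
Require Import Defs.
From HB Require Import structures.
From mathcomp Require Import all_boot all_order all_algebra.
From mathcomp Require Import all_classical all_reals all_analysis.
From mathcomp Require Import lra ring.
Import Order.TTheory GRing.Theory Num.Theory.
Import numFieldNormedType.Exports.
Local Open Scope ring_scope.

Section Helpers.
Variable R : realType.
Notation V := 'rV[R]_3.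

Lemma entry_le (v : V) j : `|v 0 j| <= `|v|.
Proof.
rewrite [X in _ <= X]/Num.Def.normr /= mx_normrE.
exact: (le_bigmax _ (fun ij : 'I_1 * 'I_3 => `|v ij.1 ij.2|) (0, j)).
Qed.

Lemma norm_le (v : V) (M : R) : 0 <= M -> (forall j, `|v 0 j| <= M) -> `|v| <= M.
Proof.
move=> M0 H; rewrite [X in X <= _]/Num.Def.normr /= mx_normrE.
apply: bigmax_le => // -[i j] _ /=; by rewrite (ord1 i).
Qed.

Lemma line_is_derive (f : V -> R) (p e : V) (t : R) :
  derivable f (p + t *: e) e ->
  is_derive t 1 (fun s => f (p + s *: e)) ('D_e f (p + t *: e)).
Proof.
move=> d.
have Heq : (fun h : R => h^-1 *: (((fun s => f (p + s *: e)) \o shift t) (h *: 1)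
             - f (p + t *: e)))
         = (fun h : R => h^-1 *: ((f \o shift (p + t *: e)) (h *: e) - f (p + t *: e))).
  apply: funext => h /=; congr (_ *: (f _ - _)).
  by rewrite scaler1 scalerDl addrCA addrA.
split; first by rewrite /derivable Heq.
by rewrite /derive Heq.
Qed.

Lemma mvt_step (f : V -> R) (p e : V) (t : R) :
  (forall y, derivable f y e) ->
  exists c : R, `|c| <= `|t| /\ f (p + t *: e) - f p = t * 'D_e f (p + c *: e).
Proof.
move=> d.
pose g := fun s : R => f (p + s *: e).
have gd : forall s : R, is_derive s (1 : R) g ('D_e f (p + s *: e)).
  by move=> s; apply: line_is_derive.
have gc : continuous g.
  move=> s; apply: differentiable_continuous.
  by apply/derivable1_diffP; have [] := gd s.
have g0 : g 0 = f p by rewrite /g scale0r addr0.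
case: (lerP 0 t) => t0.
  have [c cI Hc] := @MVT_segment R g (fun s => 'D_e f (p + s *: e)) 0 t t0
    (fun s _ => gd s) (continuous_subspaceT gc).
  exists c; split.
    move: cI; rewrite in_itv /= => /andP[c0 ct].
    by rewrite !ger0_norm.
  by rewrite -g0 Hc subr0 mulrC.
have [c cI Hc] := @MVT_segment R g (fun s => 'D_e f (p + s *: e)) t 0 (ltW t0)
  (fun s _ => gd s) (continuous_subspaceT gc).
exists c; split.
  move: cI; rewrite in_itv /= => /andP[tc c0].
  rewrite !ler0_norm ?(ltW t0) //. by rewrite lerN2.
rewrite -g0 -[LHS]opprB -/(g t) Hc sub0r mulrN opprK mulrC.
done.
Qed.


Definition i0 : 'I_3 := @Ordinal 3 0 isT.
Definition i1 : 'I_3 := @Ordinal 3 1 isT.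
Definition i2 : 'I_3 := @Ordinal 3 2 isT.

Lemma sum3 (F : 'I_3 -> R) : \sum_(i < 3) F i = F i0 + F i1 + F i2.
Proof.
rewrite !big_ord_recl big_ord0 addr0 addrA.
by congr (F _ + F _ + F _); apply/val_inj.
Qed.

Lemma ebaseE (i j : 'I_3) : ebase R i 0 j = (i == j)%:R.
Proof. by rewrite /ebase mxE eqxx /= eq_sym. Qed.

Lemma decomp (h : V) : h = h 0 i0 *: ebase R i0 + h 0 i1 *: ebase R i1 + h 0 i2 *: ebase R i2.
Proof.
apply/rowP => j; rewrite !mxE.
case: j => [[|[|[|//]]] Hj] /=.
all: rewrite ?mulr1 ?mulr0 ?addr0 ?add0r; by congr (h 0 _); apply/val_inj.
Qed.

Lemma comb_le (a b c M : R) : `|a| <= M -> `|b| <= M -> `|c| <= M ->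
  `|a *: ebase R i0 + b *: ebase R i1 + c *: ebase R i2| <= M.
Proof.
move=> ha hb hc; apply: norm_le; first exact: le_trans (normr_ge0 _) ha.
move=> j; rewrite !mxE.
case: j => [[|[|[|//]]] Hj] /=; rewrite ?mulr1 ?mulr0 ?addr0 ?add0r //.
Qed.

Definition gradL (c : 'I_3 -> R) (v : V) : R := \sum_i v 0 i * c i.

Lemma gradL_lin c : linear (gradL c).
Proof.
move=> a u v; rewrite /gradL /GRing.scale /= mulr_sumr -big_split /=.
by apply: eq_bigr => i _; rewrite !mxE mulrDl mulrA.
Qed.

Lemma gradL_cont c : continuous (gradL c).
Proof.
have -> : gradL c = (fun v => v 0 i0 * c i0 + v 0 i1 * c i1 + v 0 i2 * c i2).
  by apply: funext => v; rewrite /gradL sum3.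
have hc : forall i, continuous (fun v : V => v 0 i * c i).
  move=> i w; apply: (@continuousM _ _ (fun v : V => v 0 i) (cst (c i))).
    exact: coord_continuous.
  exact: cst_continuous.
move=> w.
apply: (@continuousD _ _ _ (fun v : V => v 0 i0 * c i0 + v 0 i1 * c i1) (fun v : V => v 0 i2 * c i2)); last exact: hc.
apply: (@continuousD _ _ _ (fun v : V => v 0 i0 * c i0) (fun v : V => v 0 i1 * c i1)); exact: hc.
Qed.

Lemma C1_diff (f : V -> R) (x : V) :
  (forall y i, derivable f y (ebase R i)) ->
  (forall i, continuous (partial i f)) ->
  'd f x = gradL (fun i => partial i f x) :> (V -> R).
Proof.
move=> Hd Hc.
pose c := fun i => partial i f x.
pose L : {linear V -> R} := HB.pack (gradL c) (GRing.isLinear.Build _ _ _ _ _ (gradL_lin c)).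
apply: (@diff_unique R _ _ f L x); first exact: gradL_cont.
apply/eqaddoP => e e0.
have e30 : 0 < e / 3 by rewrite divr_gt0.
have Hn : \forall y \near x, forall i, `|partial i f x - partial i f y| <= e / 3.
  apply: (@filter_forall _ _ (fun i y => `|partial i f x - partial i f y| <= e / 3) (nbhs x) (nbhs_filter x)) => i.
  by move: (Hc i x) => /cvgrPdist_le /(_ _ e30).
move/nbhs_ballP: Hn => [d d0 Hd'].
have Hq : forall q, `|q - x| < d -> forall i, `|partial i f x - partial i f q| <= e / 3.
  move=> q qd; apply: Hd'; rewrite -ball_normE /= distrC //.
near=> h.
have hd : `|h| < d.
  near: h. exact: (@nbhs0_lt R V _ d0).
change (`|f (h + x) - (f x + gradL c h)| <= e * `|h|).
have [c0 [c0h E0]] := mvt_step f x (ebase R i0) (h 0 i0) (fun y => Hd y i0).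
pose p1 := x + h 0 i0 *: ebase R i0.
have [c1 [c1h E1]] := mvt_step f p1 (ebase R i1) (h 0 i1) (fun y => Hd y i1).
pose p2 := p1 + h 0 i1 *: ebase R i1.
have [c2 [c2h E2]] := mvt_step f p2 (ebase R i2) (h 0 i2) (fun y => Hd y i2).
have Hx : h + x = p2 + h 0 i2 *: ebase R i2.
  by rewrite {1}(decomp h) /p2 /p1 addrC !addrA.
have hn0 := entry_le h i0; have hn1 := entry_le h i1; have hn2 := entry_le h i2.
have hpos : 0 <= `|h| by [].
have B0 : `|partial i0 f x - partial i0 f (x + c0 *: ebase R i0)| <= e / 3.
  apply: Hq; apply: le_lt_trans hd.
  have -> : x + c0 *: ebase R i0 - x = c0 *: ebase R i0 + 0 *: ebase R i1 + 0 *: ebase R i2.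
    by rewrite !scale0r !addr0 addrC addKr.
  apply: comb_le; rewrite ?normr0 //; exact: le_trans c0h hn0.
have B1 : `|partial i1 f x - partial i1 f (p1 + c1 *: ebase R i1)| <= e / 3.
  apply: Hq; apply: le_lt_trans hd.
  have -> : p1 + c1 *: ebase R i1 - x = h 0 i0 *: ebase R i0 + c1 *: ebase R i1 + 0 *: ebase R i2.
    by apply/eqP; rewrite subr_eq; apply/eqP; rewrite /p1 scale0r addr0 [RHS]addrC !addrA.
  apply: comb_le; rewrite ?normr0 //; exact: le_trans c1h hn1.
have B2 : `|partial i2 f x - partial i2 f (p2 + c2 *: ebase R i2)| <= e / 3.
  apply: Hq; apply: le_lt_trans hd.
  have -> : p2 + c2 *: ebase R i2 - x = h 0 i0 *: ebase R i0 + h 0 i1 *: ebase R i1 + c2 *: ebase R i2.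
    by apply/eqP; rewrite subr_eq; apply/eqP; rewrite /p2 /p1 [RHS]addrC !addrA.
  apply: comb_le => //; exact: le_trans c2h hn2.
have -> : f (h + x) - (f x + gradL c h) =
   h 0 i0 * (partial i0 f (x + c0 *: ebase R i0) - partial i0 f x)
 + h 0 i1 * (partial i1 f (p1 + c1 *: ebase R i1) - partial i1 f x)
 + h 0 i2 * (partial i2 f (p2 + c2 *: ebase R i2) - partial i2 f x).
  rewrite Hx /gradL sum3 /c.
  move: E0 E1 E2; rewrite -/p1 -/p2 /partial.
  set F0 := f x; set F1 := f p1; set F2 := f p2; set F3 := f (p2 + _).
  move=> E0 E1 E2.
  rewrite !mulrBr -E0 -E1 -E2.
  lra.
rewrite -[e]/(e) (_ : e * `|h| = `|h| * (e / 3) + `|h| * (e / 3) + `|h| * (e / 3)); last lra.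
apply: le_trans (ler_normD _ _) _; apply: lerD; first apply: le_trans (ler_normD _ _) _; first apply: lerD.
all: rewrite normrM; apply: ler_pM => //; rewrite distrC //.
Unshelve. all: by end_near.
Qed.

End Helpers.

Lemma ord3 (i : 'I_3) : i = i0 \/ i = i1 \/ i = i2.
Proof. by case: i => [[|[|[|//]]] Hi]; [left|right;left|right;right]; apply/val_inj. Qed.

Lemma sos3 (R : realType) (u0 u1 u2 : R) : u0 * u0 + u1 * u1 + u2 * u2 = 0 ->
  u0 = 0 /\ u1 = 0 /\ u2 = 0.
Proof.
move=> E.
have h0 : 0 <= u0 * u0 by rewrite -expr2 sqr_ge0.
have h1 : 0 <= u1 * u1 by rewrite -expr2 sqr_ge0.
have h2 : 0 <= u2 * u2 by rewrite -expr2 sqr_ge0.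
have e0 : u0 * u0 = 0 by lra.
have e1 : u1 * u1 = 0 by lra.
have e2 : u2 * u2 = 0 by lra.
by move: e0 e1 e2 => /eqP; rewrite mulf_eq0 orbb => /eqP -> /eqP;
  rewrite mulf_eq0 orbb => /eqP -> /eqP; rewrite mulf_eq0 orbb => /eqP ->.
Qed.

Lemma gd_entry (R : realType) (H S : 'rV[R]_3 -> R) x i :
  gd H S x 0 i = partial i H x * (\sum_j partial j H x * partial j S x)
     - (\sum_k partial k H x * partial k H x) * partial i S x.
Proof.
rewrite /gd mxE.
under eq_bigr do rewrite /gmetric mxE.
rewrite !sum3.
have n01 : (i0 == i1) = false by []. have n02 : (i0 == i2) = false by [].
have n12 : (i1 == i2) = false by [].
have n10 : (i1 == i0) = false by []. have n20 : (i2 == i0) = false by [].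
have n21 : (i2 == i1) = false by [].
have [->|[->|->]] := ord3 i; rewrite ?eqxx ?n01 ?n02 ?n12 ?n10 ?n20 ?n21;
move: (partial i0 H x) (partial i1 H x) (partial i2 H x) (partial i0 S x) (partial i1 S x) (partial i2 S x) => a0 a1 a2 b0 b1 b2 /=; ring.
Qed.

Lemma gradL_e (R : realType) (c : 'I_3 -> R) i : gradL R c (ebase R i) = c i.
Proof.
rewrite /gradL sum3 !ebaseE.
have n01 : (i0 == i1) = false by []. have n02 : (i0 == i2) = false by [].
have n12 : (i1 == i2) = false by [].
have n10 : (i1 == i0) = false by []. have n20 : (i2 == i0) = false by [].
have n21 : (i2 == i1) = false by [].
have [->|[->|->]] := ord3 i; rewrite ?eqxx ?n01 ?n02 ?n12 ?n10 ?n20 ?n21 /=; ring.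
Qed.



Lemma key (R : realType) (a b : 'I_3 -> R) :
  (forall i, a i * (\sum_j a j * b j) - (\sum_k a k * a k) * b i = 0) <->
  ((forall v, gradL R a v = 0) \/ (forall v, gradL R a v = 0 -> gradL R b v = 0)).
Proof.
rewrite !sum3.
have gE : forall c (v : 'rV[R]_3), gradL R c v = v 0 i0 * c i0 + v 0 i1 * c i1 + v 0 i2 * c i2.
  by move=> c v; rewrite /gradL sum3.
set N := a i0 * a i0 + a i1 * a i1 + a i2 * a i2.
set ab := a i0 * b i0 + a i1 * b i1 + a i2 * b i2.
split.
  move=> G.
  have G0 := G i0; have G1 := G i1; have G2 := G i2.
  have [N0|N0] := eqVneq N 0.
    left => v; rewrite gE; have [-> [-> ->]] := @sos3 R _ _ _ N0; ring.
  right => v; rewrite !gE => va.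
  have : N * (v 0 i0 * b i0 + v 0 i1 * b i1 + v 0 i2 * b i2) = 0.
    have -> : N * (v 0 i0 * b i0 + v 0 i1 * b i1 + v 0 i2 * b i2) =
      ab * (v 0 i0 * a i0 + v 0 i1 * a i1 + v 0 i2 * a i2)
      - v 0 i0 * (a i0 * ab - N * b i0) - v 0 i1 * (a i1 * ab - N * b i1)
      - v 0 i2 * (a i2 * ab - N * b i2) by ring.
    by rewrite va G0 G1 G2; ring.
  by move/eqP; rewrite mulf_eq0 (negbTE N0) /= => /eqP.
case=> [Ha|Hc] i.
  have a0 := Ha (ebase R i0); have a1 := Ha (ebase R i1); have a2 := Ha (ebase R i2).
  rewrite !gradL_e in a0 a1 a2.
  have -> : N = 0 by rewrite /N a0 a1 a2; ring.
  have [->|[->|->]] := ord3 i; rewrite ?a0 ?a1 ?a2; ring.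
pose w := \row_j (N * b j - ab * a j) : 'rV[R]_3.
have wa : gradL R a w = 0.
  rewrite gE !mxE /N /ab; ring.
have wb := Hc w wa.
have : (N * b i0 - ab * a i0) * (N * b i0 - ab * a i0) + (N * b i1 - ab * a i1) * (N * b i1 - ab * a i1)
  + (N * b i2 - ab * a i2) * (N * b i2 - ab * a i2) = 0.
  move: wa wb; rewrite !gE !mxE => wa wb.
  have -> : (N * b i0 - ab * a i0) * (N * b i0 - ab * a i0) + (N * b i1 - ab * a i1) * (N * b i1 - ab * a i1)
  + (N * b i2 - ab * a i2) * (N * b i2 - ab * a i2) =
    N * ((N * b i0 - ab * a i0) * b i0 + (N * b i1 - ab * a i1) * b i1 + (N * b i2 - ab * a i2) * b i2)
    - ab * ((N * b i0 - ab * a i0) * a i0 + (N * b i1 - ab * a i1) * a i1 + (N * b i2 - ab * a i2) * a i2) by ring.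
  by rewrite wa wb; ring.
move/(@sos3 R _ _ _) => [w0 [w1 w2]].
have [->|[->|->]] := ord3 i.
- by rewrite -oppr0 -w0; ring.
- by rewrite -oppr0 -w1; ring.
- by rewrite -oppr0 -w2; ring.
Qed.



Theorem mainTheorem6 (R : realType) (P : 'rV[R]_3 -> 'M[R]_3)
  (H S : 'rV[R]_3 -> R) :
  poisson_tensor P -> smooth H -> smooth S ->
  (forall x, Pd P S x = 0) ->
  forall x : 'rV[R]_3,
    xi P H S x = xiP P H x <->
    ((forall v : 'rV[R]_3, 'd H x v = 0) \/ crit_on_level S H x).
Proof.
move=> _ sH sS _ x.
have [_ [dH cH]] := sH 1%N.
have [_ [dS cS]] := sS 1%N.
have DH := @C1_diff R H x dH cH.
have DS := @C1_diff R S x dS cS.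
rewrite /crit_on_level DH DS.
have -> : (xi P H S x = xiP P H x) <-> (gd H S x = 0).
  rewrite /xi /xiP; split => [E|->]; last by rewrite addr0.
  by apply: (@addrI _ (Pd P H x)); rewrite addr0.
have -> : (gd H S x = 0) <-> (forall i, gd H S x 0 i = 0).
  split => [-> i|E]; first by rewrite mxE.
  by apply/rowP => i; rewrite E mxE.
rewrite -(@key R (fun i => partial i H x) (fun i => partial i S x)).
by split => E i; [rewrite -gd_entry | rewrite gd_entry].
Qed.
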